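(* The set of finite factors of $\mathbf{t}_{3/2}$ and the set of finite factors of $\mathbf{t}'$ are each closed under reversal: if $u\in\{0,1\}^*$ is a factor of one of these words, then so is its reversal $u^R$.
   Context: Base-$3/2$ expansions: $\langle 0\rangle_{3/2}$ is the empty word, and for $n\ge 1$, writing $2n=3m+d$ with integers $m\ge0$, $d\in\{0,1,2\}$, set $\langle n\rangle_{3/2}=\langle m\rangle_{3/2}\,d$. The Thue--Morse word in base $3/2$ is $\mathbf{t}_{3/2}=(t_n)_{n\ge0}\in\{0,1\}^{\mathbb{N}}$ where $t_n$ is the digit sum of $\langle n\rangle_{3/2}$ modulo $2$; equivalently the unique binary sequence with $t_0=0$, $t_{3n}=t_{3n+1}=t_{2n}$, $t_{3n+2}=1-t_{2n+1}$. Dekking's word $\mathbf{t}'=(x_n)_{n\ge0}$ is the unique binary infinite word with $x_0=0$ such that $\mathbf{t}'=\beta(x_0x_1)\beta(x_2x_3)\cdots$ where $\beta(00)=\beta(01)=010$, $\beta(10)=\beta(11)=101$. The reversal of $a_1\cdots a_n$ is $a_n\cdots a_1$. *)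

(* Defs.v *)
From mathcomp Require Import all_boot.
Set Implicit Arguments. Unset Strict Implicit. Unset Printing Implicit Defensive.

(* Binary letters are encoded as bool: 0 = false, 1 = true. *)

(* Base-3/2 expansion <n>_{3/2} as a sequence of digits (most significant
   first).  <0> = [::], and for n >= 1 with 2n = 3m + d, <n> = <m> d.
   Computed with fuel: m < n whenever n >= 1, so fuel n suffices. *)
Fixpoint exp32_fuel (fuel n : nat) : seq nat :=
  match fuel with
  | 0 => [::]
  | f.+1 => if n == 0 then [::]
            else rcons (exp32_fuel f ((2 * n) %/ 3)) ((2 * n) %% 3)
  end.

Definition exp32 (n : nat) : seq nat := exp32_fuel n n.

Definition t32 (n : nat) : bool := odd (sumn (exp32 n)).

Definition beta (a b : bool) : seq bool :=
  match a, b with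
  | false, false => [:: false; true; false]
  | false, true  => [:: false; true; false]
  | true, false  => [:: true; false; true]
  | true, true   => [:: true; false; true]
  end.

(* x is Dekking's word: x_0 = 0 and x = beta(x0 x1) beta(x2 x3) ...,
   i.e. the k-th block of length 3 of x is beta(x_{2k} x_{2k+1}).
   Such a word exists and is unique. *)
Definition is_dekking (x : nat -> bool) : Prop :=
  x 0 = false /\
  forall k, [:: x (3 * k); x (3 * k + 1); x (3 * k + 2)] = beta (x (2 * k)) (x (2 * k + 1)).

Definition factor (w : nat -> bool) (u : seq bool) : Prop :=
  exists i, u = mkseq (fun j => w (i + j)) (size u).

(* Main.v *)
Require Import Defs.
From mathcomp Require Import all_boot.
From mathcomp Require Import zify.
From Stdlib Require Import Classical.

Lemma fuel_eq f g n : n <= f -> n <= g -> exp32_fuel f n = exp32_fuel g n.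
Proof.
elim: f g n => [|f IH] [|g] n /=.
- by [].
- by case: n.
- by case: n.
- move=> Hf Hg; case: ifP => // Hn; congr rcons; apply: IH; lia.
Qed.

Lemma T n : t32 n = t32 ((2 * n) %/ 3) (+) (n %% 3 == 2).
Proof.
case: n => [|n]; first by [].
rewrite /t32 /exp32 /= sumn_rcons oddD.
rewrite (@fuel_eq n ((2 * n.+1) %/ 3)); [|lia|lia].
congr (_ (+) _).
have : n.+1 %% 3 = 0 \/ n.+1 %% 3 = 1 \/ n.+1 %% 3 = 2 by lia.
case=> [H|[H|H]].
- have -> : (2 * n.+1) %% 3 = 0 by lia. by rewrite H.
- have -> : (2 * n.+1) %% 3 = 2 by lia. by rewrite H.
- have -> : (2 * n.+1) %% 3 = 1 by lia. by rewrite H.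
Qed.

Lemma t0 : t32 0 = false. Proof. by []. Qed.

Definition pp n := (2 * n) %/ 3.
Fixpoint pit k n := if k is k'.+1 then pit k' (pp n) else n.

Lemma P1 n e : t32 (n + 3 * e) (+) t32 n = t32 (pp n + 2 * e) (+) t32 (pp n).
Proof.
rewrite (T (n + 3 * e)) (T n) /pp.
have -> : (2 * (n + 3 * e)) %/ 3 = (2 * n) %/ 3 + 2 * e by lia.
have -> : (n + 3 * e) %% 3 = n %% 3 by lia.
move: (t32 _) (t32 _) (_ == _) => A B c.
by case: A; case: B; case: c.
Qed.

Lemma Pk k n e : t32 (n + 3 ^ k * e) (+) t32 n = t32 (pit k n + 2 ^ k * e) (+) t32 (pit k n).
Proof.
elim: k n e => [|k IH] n e /=; first by rewrite !expn0 !mul1n.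
rewrite expnS -mulnA P1.
have -> : 2 * (3 ^ k * e) = 3 ^ k * (2 * e) by lia.
by rewrite IH expnS mulnA (mulnC (2 ^ k) 2).
Qed.

Lemma pit0 A r : r <= A -> pit A r = 0.
Proof.
elim: A r => [|A IH] r /=; first by case: r.
move=> H; apply: IH; rewrite /pp; lia.
Qed.

Lemma pow3 j : exists k, 3 ^ (2 ^ j) = 1 + 2 ^ j.+1 * k.
Proof.
elim: j => [|j [k IH]]; first by exists 1.
exists (k + 2 ^ j * k * k).
rewrite expnSr expnM IH.
rewrite !expnS. set P := 2 ^ j. nia.
Qed.

Lemma pow3mod j J : j <= J -> 3 ^ (2 ^ J) = 1 %[mod 2 ^ j].
Proof.
move=> H; case: (pow3 J) => k ->.
have -> : 2 ^ J.+1 = 2 ^ (J.+1 - j) * 2 ^ j by rewrite -expnD subnK //; lia.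
by rewrite mulnAC addnC modnMDl.
Qed.

Lemma lemZ j r : exists n, n %% 2 ^ j = r %% 2 ^ j /\ t32 n = false.
Proof.
apply: NNPP => Hn.
set M := 2 ^ j.
have M0 : 0 < M by rewrite expn_gt0.
set r0 := r %% M.
have r0M : r0 < M by rewrite ltn_pmod.
have H : forall n, n %% M = r0 -> t32 n = true.
  move=> n Hn'; case E: (t32 n) => //; exfalso; apply: Hn; exists n; split => //.
have FA : forall A, 3 ^ A = 1 %[mod M] -> M <= A ->
    forall x, t32 (2 ^ A * x) = ~~ t32 ((r0 + M - x %% M) %% M).
  move=> A HA HMA x.
  set rho := (r0 + M - x %% M) %% M.
  have rhoM : rho < M by rewrite ltn_pmod.
  have := Pk A rho x.
  rewrite pit0; last by lia.
  rewrite add0n t0 addbF.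
  rewrite H; last first.
    rewrite /rho modnDml -modnDmr -modnMml HA modnMml mul1n modnDmr.
    rewrite {2}(divn_eq x M).
    have xmM : x %% M < M by rewrite ltn_pmod.
    move: (x %/ M) (x %% M) xmM => q xm xmM.
    have -> : r0 + M - xm + (q * M + xm) = q.+1 * M + r0 by rewrite mulSn; lia.
    by rewrite modnMDl modn_small.
  by move=> <-; case: (t32 rho).
have Ha1 := FA M (@pow3mod j j (leqnn j)) (leqnn M) (2 ^ M * r0).
have Ha2 := FA (2 ^ j.+1) (@pow3mod j j.+1 (leqnSn j)) (leq_pexp2l (isT : 0 < 2) (leqnSn j)) r0.
have Hd : (2 ^ M * r0) %% M = 0.
  apply/eqP; apply: dvdn_mulr; apply: dvdn_exp2l.
  rewrite /M; apply: ltnW; exact: ltn_expl.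
have Hr0 : t32 r0 = true by apply: H; rewrite modn_small.
rewrite Hd subn0 modnDr modn_small // Hr0 in Ha1.
have E : r0 %% M = r0 by rewrite modn_small.
rewrite E addKn modnn t0 in Ha2.
move: Ha1 Ha2; rewrite expnS mul2n -addnn expnD -mulnA => -> //.
Qed.



Lemma inv3 j r : exists x, x < 2 ^ j /\ (3 * x + 1) %% 2 ^ j = r %% 2 ^ j.
Proof.
set M := 2 ^ j.
have M0 : 0 < M by rewrite expn_gt0.
exists ((3 ^ M.-1 * (r + M - 1)) %% M); split; first by rewrite ltn_pmod.
rewrite -modnDml modnMmr modnDml mulnA -expnS prednK //.
rewrite -modnDml -modnMml (@pow3mod j j (leqnn j)) modnMml mul1n modnDml.
have -> : r + M - 1 + 1 = r + M by lia.
by rewrite modnDr.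
Qed.

Lemma refl_t hi : forall lo, lo <= hi -> forall j r, exists S, hi <= S /\
  S %% 2 ^ j = r %% 2 ^ j /\ forall p, lo <= p <= hi -> t32 (S - p) = t32 p.
Proof.
elim/ltn_ind: hi => hi IH lo Hlo j r.
case: (posnP hi) => Hhi.
  subst hi; have -> : lo = 0 by lia.
  case: (lemZ j r) => n [Hn Htn]; exists n; split => //; split => //.
  move=> p Hp; have -> : p = 0 by lia.
  by rewrite subn0 Htn t0.
set M := 2 ^ j.
have M0 : 0 < M by rewrite expn_gt0.
case: (inv3 j r) => x [HxM Hx].
have Hlt : pp hi < hi by rewrite /pp; lia.
have Hlo' : pp lo <= pp hi by rewrite /pp; lia.
case: (IH (pp hi) Hlt (pp lo) Hlo' j.+1 (2 * x)) => Sp [HSp [HSpm HSpr]].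
have E2 : 2 ^ j.+1 = M * 2 by rewrite expnSr.
have Hsm : (2 * x) %% 2 ^ j.+1 = 2 * x by rewrite modn_small // E2; lia.
have HSq : Sp = 2 * (Sp %/ 2 ^ j.+1 * M + x).
  rewrite {1}(divn_eq Sp (2 ^ j.+1)) HSpm Hsm E2.
  move: (Sp %/ (M * 2)) => q. lia.
move: HSq; set w := Sp %/ 2 ^ j.+1 * M + x => HSq.
exists (3 * w + 1); split; first by rewrite /pp in HSp; lia.
split.
  rewrite /w mulnDr mulnA -addnA -modnDmr.
  by rewrite modnMDl modn_mod.
move=> p /andP [Hp1 Hp2].
rewrite (T (3 * w + 1 - p)) (T p).
have -> : (2 * (3 * w + 1 - p)) %/ 3 = Sp - pp p by rewrite /pp in HSp *; lia.
have -> : ((3 * w + 1 - p) %% 3 == 2) = (p %% 3 == 2).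
  rewrite /pp in HSp; apply/idP/idP => /eqP Hq; apply/eqP; lia.
rewrite HSpr //; rewrite /pp; apply/andP; split; lia.
Qed.

Lemma rev_factor (w : nat -> bool) :
  (forall lo hi, lo <= hi -> exists S, hi <= S /\ forall p, lo <= p <= hi -> w (S - p) = w p) ->
  forall u, factor w u -> factor w (rev u).
Proof.
move=> Hr u [i Hu].
case: (posnP (size u)) => HL.
  by move/size0nil: HL => ->; exists 0.
have [S [HS HSp]] := Hr i (i + size u - 1) ltac:(lia).
exists (S - (i + size u - 1)).
apply: (@eq_from_nth _ false); first by rewrite size_mkseq.
move=> k; rewrite size_rev => Hk.
rewrite nth_rev // nth_mkseq; last by lia.
rewrite {1}Hu nth_mkseq; last by lia.
have -> : S - (i + size u - 1) + k = S - (i + (size u - k.+1)) by lia.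
by rewrite HSp //; apply/andP; split; lia.
Qed.

Section Dek.
Variable x : nat -> bool.
Hypothesis Hx : is_dekking x.

Lemma dek k : [/\ x (3 * k) = x (2 * k), x (3 * k + 1) = ~~ x (2 * k) & x (3 * k + 2) = x (2 * k)].
Proof.
case: Hx => _ /(_ k).
by case: (x (2 * k)); case: (x (2 * k + 1)) => /= [[-> -> ->]|[-> -> ->]].
Qed.

Lemma tT3 m : [/\ t32 (3 * m) = t32 (2 * m), t32 (3 * m + 1) = t32 (2 * m) &
   t32 (3 * m + 2) = ~~ t32 (2 * m + 1)].
Proof.
rewrite (T (3 * m)) (T (3 * m + 1)) (T (3 * m + 2)).
have -> : (2 * (3 * m)) %/ 3 = 2 * m by lia.
have -> : (2 * (3 * m + 1)) %/ 3 = 2 * m by lia.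
have -> : (2 * (3 * m + 2)) %/ 3 = 2 * m + 1 by lia.
have -> : (3 * m) %% 3 = 0 by lia.
have -> : (3 * m + 1) %% 3 = 1 by lia.
have -> : (3 * m + 2) %% 3 = 2 by lia.
by split => //=; rewrite ?addbF ?addbT.
Qed.

Lemma xe k : x (2 * k) = t32 k.
Proof.
elim/ltn_ind: k => k IH.
case: (posnP k) => Hk; first by subst k; case: Hx.
have [m [e [He Hke]]] : exists m e, e < 3 /\ k = 3 * m + e.
  by exists (k %/ 3), (k %% 3); split; lia.
case: e He Hke => [|[|[|e]]] // _ Hke.
- have -> : 2 * k = 3 * (2 * m) by lia.
  case: (dek (2 * m)) => -> _ _.
  rewrite IH; last by lia.
  by rewrite Hke addn0; case: (tT3 m) => -> _ _.
- have -> : 2 * k = 3 * (2 * m) + 2 by lia.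
  case: (dek (2 * m)) => _ _ ->.
  rewrite IH; last by lia.
  by rewrite Hke; case: (tT3 m) => _ -> _.
- have -> : 2 * k = 3 * (2 * m + 1) + 1 by lia.
  case: (dek (2 * m + 1)) => _ -> _.
  rewrite IH; last by lia.
  by rewrite Hke; case: (tT3 m) => _ _ ->.
Qed.

Lemma xt n : x n = t32 (n %/ 3) (+) (n %% 3 == 1).
Proof.
have E : n = 3 * (n %/ 3) + n %% 3 by lia.
have : n %% 3 = 0 \/ n %% 3 = 1 \/ n %% 3 = 2 by lia.
case=> [H|[H|H]]; rewrite H; rewrite H in E; rewrite {1}E.
- by case: (dek (n %/ 3)) => + _ _; rewrite addn0 xe => ->; rewrite addbF.
- by case: (dek (n %/ 3)) => _ -> _; rewrite xe addbT.
- by case: (dek (n %/ 3)) => _ _ ->; rewrite xe addbF.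
Qed.

Lemma refl_x lo hi : lo <= hi -> exists S, hi <= S /\ forall p, lo <= p <= hi -> x (S - p) = x p.
Proof.
move=> H.
have [S [HS [_ HSp]]] := refl_t (hi %/ 3) (lo %/ 3) ltac:(lia) 0 0.
exists (3 * S + 2); split; first by lia.
move=> p /andP [Hp1 Hp2].
rewrite !xt.
have -> : (3 * S + 2 - p) %/ 3 = S - p %/ 3 by lia.
have -> : ((3 * S + 2 - p) %% 3 == 1) = (p %% 3 == 1).
  by apply/idP/idP => /eqP Hq; apply/eqP; lia.
by rewrite HSp //; apply/andP; split; lia.
Qed.
End Dek.

Theorem proposition17 :
  (forall u : seq bool, factor t32 u -> factor t32 (rev u)) /\
  (forall x : nat -> bool, is_dekking x ->
     forall u : seq bool, factor x u -> factor x (rev u)).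
Proof.
split.
- apply: rev_factor => lo hi H.
  have [S [HS [_ HSp]]] := @refl_t hi lo H 0 0.
  by exists S.
- move=> x Hx; apply: rev_factor => lo hi H.
  exact: refl_x.
Qed.
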